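(* For every positive integer $n$ and every $r \in [\sqrt{\frac{13}{48}}, \frac{\sqrt{3}}{3})$, we have $N_n(r) \ge \lceil \frac{n}{2} \rceil$.
   Context: For a positive integer $n$, let $\mathcal{P}_n$ denote the family of all sets of $n$ points in the Euclidean plane such that the distance between any two points of the set is at most $1$. For $0 < r \le 1$, let $N_n(r)$ be the largest integer $k$ such that for every $P \in \mathcal{P}_n$ there exists a circle of radius $r$ (i.e. a closed disc of radius $r$) which covers (contains) at least $k$ points of $P$. *)

(* Defs.v *)
From Stdlib Require Import Reals List.
Import ListNotations.
Open Scope R_scope.

Definition point : Type := (R * R)%type.

Definition dist2 (p q : point) : R :=
  sqrt ((fst p - fst q) ^ 2 + (snd p - snd q) ^ 2).

Definition is_point_set (n : nat) (P : list point) : Prop :=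
  NoDup P /\ length P = n.

Definition in_family (n : nat) (P : list point) : Prop :=
  is_point_set n P /\ (forall p q, In p P -> In q P -> dist2 p q <= 1).

Definition disc_covers_at_least (c : point) (r : R) (P : list point) (k : nat) : Prop :=
  exists Q : list point,
    NoDup Q /\ (k <= length Q)%nat /\
    (forall q, In q Q -> In q P /\ dist2 c q <= r).

(* "k is admissible for N_n(r)": for every P in P_n there is a closed disc of
   radius r covering at least k points of P.  N_n(r) is the largest admissible
   k, and admissibility is downward closed, so  N_n(r) >= k  <->  N_admissible n r k. *)
Definition N_admissible (n : nat) (r : R) (k : nat) : Prop :=
  forall P : list point, in_family n P ->
    exists c : point, disc_covers_at_least c r P k.

Definition ceil_half (n : nat) : nat := Nat.div (n + 1) 2.

(* Main.v *)
Require Import Defs.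
From Stdlib Require Import Reals List.
From Stdlib Require Import Lra Lia Psatz FunctionalExtensionality.
Import ListNotations.
Open Scope R_scope.

Lemma cont_plus f g : continuity f -> continuity g -> continuity (fun x => f x + g x).
Proof. intros Hf Hg; exact (continuity_plus f g Hf Hg). Qed.
Lemma cont_minus f g : continuity f -> continuity g -> continuity (fun x => f x - g x).
Proof. intros Hf Hg; exact (continuity_minus f g Hf Hg). Qed.
Lemma cont_mult f g : continuity f -> continuity g -> continuity (fun x => f x * g x).
Proof. intros Hf Hg; exact (continuity_mult f g Hf Hg). Qed.
Lemma cont_opp f : continuity f -> continuity (fun x => - f x).
Proof. intros Hf; exact (continuity_opp f Hf). Qed.
Lemma cont_const c : continuity (fun _ => c).
Proof. apply continuity_const; intros x y; reflexivity. Qed.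
Lemma cont_abs f : continuity f -> continuity (fun x => Rabs (f x)).
Proof. intros Hf. exact (continuity_comp f Rabs Hf Rcontinuity_abs). Qed.

Lemma Rmax_formula a b : Rmax a b = (a + b + Rabs (a - b)) / 2.
Proof.
  unfold Rmax; destruct (Rle_dec a b).
  - rewrite Rabs_left1; lra.
  - rewrite Rabs_right; lra.
Qed.

Lemma cont_max f g : continuity f -> continuity g -> continuity (fun x => Rmax (f x) (g x)).
Proof.
  intros Hf Hg.
  replace (fun x => Rmax (f x) (g x)) with (fun x => (f x + g x + Rabs (f x - g x)) * / 2).
  - apply cont_mult; [|apply cont_const].
    apply cont_plus; [apply cont_plus; auto|].
    apply cont_abs, cont_minus; auto.
  - apply functional_extensionality; intros x; rewrite Rmax_formula; reflexivity.
Qed.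

Fixpoint maxa (g : point -> R) (x : R) (l : list point) : R :=
  match l with [] => x | y :: t => Rmax (g y) (maxa g x t) end.

Lemma maxa_ge g x l : x <= maxa g x l /\ forall z, In z l -> g z <= maxa g x l.
Proof.
  induction l as [|y t IH]; simpl.
  - split; [lra | tauto].
  - destruct IH as [H1 H2]. split.
    + eapply Rle_trans; [exact H1 | apply Rmax_r].
    + intros z [<- | Hz]. apply Rmax_l.
      eapply Rle_trans; [apply H2; exact Hz | apply Rmax_r].
Qed.

Lemma maxa_att g x l : maxa g x l = x \/ exists z, In z l /\ maxa g x l = g z.
Proof.
  induction l as [|y t IH]; simpl.
  - left; auto.
  - unfold Rmax. destruct (Rle_dec (g y) (maxa g x t)).
    + destruct IH as [H | [z [Hz H]]]. left; auto. right; exists z; auto.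
    + right; exists y; auto.
Qed.

Lemma maxa_cont (G : R -> point -> R) (x : R -> R) l :
  continuity x -> (forall z, continuity (fun t => G t z)) ->
  continuity (fun t => maxa (G t) (x t) l).
Proof.
  intros Hx HG. induction l as [|y l IH]; simpl. exact Hx.
  apply cont_max; auto.
Qed.

Definition q := sqrt 3.
Definition dot (a b : R) (z : point) : R := a * fst z + b * snd z.
Definition Mx (p0 : point) ps a b := maxa (dot a b) (dot a b p0) ps.
Definition F p0 ps a b := Mx p0 ps a b - Mx p0 ps (-a) (-b).

Lemma Mx_ge p0 ps a b z : In z (p0 :: ps) -> dot a b z <= Mx p0 ps a b.
Proof.
  unfold Mx; destruct (maxa_ge (dot a b) (dot a b p0) ps) as [H1 H2].
  intros [<- | Hz]; auto.
Qed.

Lemma Mx_att p0 ps a b : exists z, In z (p0 :: ps) /\ Mx p0 ps a b = dot a b z.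
Proof.
  unfold Mx; destruct (maxa_att (dot a b) (dot a b p0) ps) as [H | [z [Hz H]]].
  - exists p0; split; [left; auto | auto].
  - exists z; split; [right; auto | auto].
Qed.

Lemma Mx_cont p0 ps (A B : R -> R) :
  continuity A -> continuity B -> continuity (fun t => Mx p0 ps (A t) (B t)).
Proof.
  intros HA HB. unfold Mx.
  apply (maxa_cont (fun t => dot (A t) (B t)) (fun t => dot (A t) (B t) p0)).
  - unfold dot; apply cont_plus; apply cont_mult; auto; apply cont_const.
  - intros z; unfold dot; apply cont_plus; apply cont_mult; auto; apply cont_const.
Qed.

Lemma F_cont p0 ps (A B : R -> R) :
  continuity A -> continuity B -> continuity (fun t => F p0 ps (A t) (B t)).
Proof.
  intros HA HB. unfold F. apply cont_minus; apply Mx_cont; auto; apply cont_opp; auto.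
Qed.

Definition u1x t := cos t.
Definition u1y t := sin t.
Definition u2x t := - cos t / 2 - q / 2 * sin t.
Definition u2y t := - sin t / 2 + q / 2 * cos t.
Definition u3x t := - cos t / 2 + q / 2 * sin t.
Definition u3y t := - sin t / 2 - q / 2 * cos t.

Definition h p0 ps t :=
  F p0 ps (u1x t) (u1y t) + F p0 ps (u2x t) (u2y t) + F p0 ps (u3x t) (u3y t).

Lemma q2 : q * q = 3.
Proof. unfold q; apply sqrt_sqrt; lra. Qed.
Lemma q_pos : 0 < q.
Proof. unfold q; apply sqrt_lt_R0; lra. Qed.

Lemma h_cont p0 ps : continuity (h p0 ps).
Proof.
  unfold h.
  assert (Hc : continuity cos) by exact continuity_cos.
  assert (Hs : continuity sin) by exact continuity_sin.
  assert (K : forall k, continuity (fun t => k * cos t) /\ continuity (fun t => k * sin t)).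
  { intros k; split; apply cont_mult; auto; apply cont_const. }
  apply cont_plus; [apply cont_plus|]; apply F_cont; unfold u1x, u1y, u2x, u2y, u3x, u3y; auto.
  all: first [ apply cont_minus | apply cont_plus ];
    [ apply cont_mult; [apply cont_opp; auto | apply cont_const]
    | apply K ].
Qed.

Lemma rot_facts t :
  u1x (t + PI/3) = - u3x t /\ u1y (t + PI/3) = - u3y t /\
  u2x (t + PI/3) = - u1x t /\ u2y (t + PI/3) = - u1y t /\
  u3x (t + PI/3) = - u2x t /\ u3y (t + PI/3) = - u2y t.
Proof.
  unfold u1x, u1y, u2x, u2y, u3x, u3y.
  rewrite cos_plus, sin_plus, cos_PI3, sin_PI3. fold q.
  assert (Q : q ^ 2 = 3) by (rewrite <- q2; ring).
  repeat split; apply Rminus_diag_uniq; ring_simplify; try replace ((q/2)^2) with (3/4) by (rewrite <- q2; field); field.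
Qed.

Lemma h_rot p0 ps t : h p0 ps (t + PI/3) = - h p0 ps t.
Proof.
  destruct (rot_facts t) as [E1 [E2 [E3 [E4 [E5 E6]]]]].
  unfold h. rewrite E1, E2, E3, E4, E5, E6.
  unfold F. rewrite !Ropp_involutive. ring.
Qed.

Lemma h_zero p0 ps : exists t, h p0 ps t = 0.
Proof.
  pose proof PI_RGT_0 as HPI.
  destruct (total_order_T (h p0 ps 0) 0) as [[Hl | He] | Hg].
  - destruct (IVT (h p0 ps) 0 (PI/3) (h_cont p0 ps)) as [z [_ Hz]].
    + lra.
    + auto.
    + replace (PI/3) with (0 + PI/3) by ring. rewrite h_rot. lra.
    + exists z; auto.
  - exists 0; auto.
  - destruct (IVT (fun t => - h p0 ps t) 0 (PI/3)) as [z [_ Hz]].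
    + apply cont_opp, h_cont.
    + lra.
    + lra.
    + replace (PI/3) with (0 + PI/3) by ring. rewrite h_rot. lra.
    + exists z; lra.
Qed.

Lemma unit_u t :
  u1x t ^ 2 + u1y t ^ 2 = 1 /\ u2x t ^ 2 + u2y t ^ 2 = 1 /\ u3x t ^ 2 + u3y t ^ 2 = 1.
Proof.
  pose proof (sin2_cos2 t) as H. unfold Rsqr in H.
  pose proof q2 as Q.
  unfold u1x, u1y, u2x, u2y, u3x, u3y.
  repeat split.
  - nra.
  - replace ((- cos t / 2 - q / 2 * sin t) ^ 2 + (- sin t / 2 + q / 2 * cos t) ^ 2)
      with ((1 + q * q) / 4 * (sin t * sin t + cos t * cos t)) by field.
    rewrite H, Q; field.
  - replace ((- cos t / 2 + q / 2 * sin t) ^ 2 + (- sin t / 2 - q / 2 * cos t) ^ 2)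
      with ((1 + q * q) / 4 * (sin t * sin t + cos t * cos t)) by field.
    rewrite H, Q; field.
Qed.

Lemma dist_sq p p' : dist2 p p' <= 1 -> (fst p - fst p')^2 + (snd p - snd p')^2 <= 1.
Proof.
  unfold dist2. set (s := (fst p - fst p')^2 + (snd p - snd p')^2).
  assert (0 <= s) by (unfold s; pose proof (pow2_ge_0 (fst p - fst p')); pose proof (pow2_ge_0 (snd p - snd p')); lra).
  intros Hd. pose proof (sqrt_sqrt s H). pose proof (sqrt_pos s). nra.
Qed.

Lemma dir_bound p0 ps a b :
  a ^ 2 + b ^ 2 = 1 ->
  (forall p p', In p (p0 :: ps) -> In p' (p0 :: ps) -> dist2 p p' <= 1) ->
  forall z, In z (p0 :: ps) ->
  - (1/2) <= dot a b z - F p0 ps a b / 2 <= 1/2.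
Proof.
  intros Hab Hd z Hz.
  destruct (Mx_att p0 ps a b) as [p [Hp E1]].
  destruct (Mx_att p0 ps (-a) (-b)) as [p' [Hp' E2]].
  pose proof (Mx_ge p0 ps a b z Hz) as G1.
  pose proof (Mx_ge p0 ps (-a) (-b) z Hz) as G2.
  pose proof (dist_sq p p' (Hd p p' Hp Hp')) as D.
  assert (K : dot a b p + dot (-a) (-b) p' <= 1).
  { unfold dot. set (dx := fst p - fst p') in *. set (dy := snd p - snd p') in *.
    replace (a * fst p + b * snd p + (- a * fst p' + - b * snd p')) with (a * dx + b * dy)
      by (unfold dx, dy; ring).
    assert ((a * dx + b * dy) ^ 2 <= 1).
    { assert ((a*dx+b*dy)^2 + (a*dy - b*dx)^2 = (a^2+b^2)*(dx^2+dy^2)) by ring.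
      rewrite Hab in H. pose proof (pow2_ge_0 (a*dy - b*dx)). lra. }
    destruct (Rle_dec (a * dx + b * dy) 1) as [Hl|Hl]; [exact Hl|].
    assert (1 < (a * dx + b * dy) ^ 2).
    { apply Rnot_le_lt in Hl.
      assert (1 * 1 < (a * dx + b * dy) * (a * dx + b * dy)) by (apply Rmult_le_0_lt_compat; lra).
      lra. }
    lra. }
  unfold F. unfold dot in *. rewrite E1, E2. unfold dot in *. split; nra.
Qed.

Lemma final_ineq X Y :
  - (1/2) <= X <= 1/2 ->
  - (1/2) <= - X / 2 + q * Y / 2 <= 1/2 ->
  - (1/2) <= - X / 2 - q * Y / 2 <= 1/2 ->
  0 <= Y -> X ^ 2 + (Y - q / 12) ^ 2 <= 13 / 48.
Proof.
  intros H1 H2 H3 HY.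
  pose proof q2 as Q. pose proof q_pos as Qp.
  assert (E : (q*Y-1/4)^2 - 3*(Y-q/12)^2 = (q*q-3)*(Y^2 - 1/48)) by field.
  rewrite Q in E.
  set (W := q * Y) in *.
  assert (HW : 0 <= W) by (unfold W; nra).
  assert (48 * X ^ 2 + 16 * (W - 1/4) ^ 2 <= 13).
  { destruct (Rle_dec W (1/2)).
    - nra.
    - assert (X^2 <= (1 - W)^2) by nra. nra. }
  nra.
Qed.

Lemma rot_norm dx dy co si : co * co + si * si = 1 ->
  dx ^ 2 + dy ^ 2 = (dx * co + dy * si) ^ 2 + (- dx * si + dy * co) ^ 2.
Proof.
  intros H.
  replace ((dx * co + dy * si) ^ 2 + (- dx * si + dy * co) ^ 2)
    with ((dx^2 + dy^2) * (co * co + si * si)) by ring.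
  rewrite H; ring.
Qed.

Lemma geo co si s1 s2 s3 x y :
  co * co + si * si = 1 -> s1 + s2 + s3 = 0 ->
  - (1/2) <= (co * x + si * y) - s1 <= 1/2 ->
  - (1/2) <= (- (co * x + si * y) / 2 + q / 2 * (- si * x + co * y)) - s2 <= 1/2 ->
  - (1/2) <= (- (co * x + si * y) / 2 - q / 2 * (- si * x + co * y)) - s3 <= 1/2 ->
  let tt := (s2 - s3) / q in
  let ox := s1 * co - tt * si in
  let oy := s1 * si + tt * co in
  (ox - q / 12 * si - x) ^ 2 + (oy + q / 12 * co - y) ^ 2 <= 13 / 48 \/
  (ox + q / 12 * si - x) ^ 2 + (oy - q / 12 * co - y) ^ 2 <= 13 / 48.
Proof.
  intros Hcs Hs H1 H2 H3 tt ox oy.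
  pose proof q_pos as Qp.
  assert (Htt : q * tt = s2 - s3) by (unfold tt; field; lra).
  set (A1 := co * x + si * y) in *.
  set (V := - si * x + co * y) in *.
  set (X := A1 - s1). set (Y := V - tt).
  assert (E2 : - A1 / 2 + q / 2 * V - s2 = - X / 2 + q * Y / 2).
  { unfold X, Y. lra. }
  assert (E3 : - A1 / 2 - q / 2 * V - s3 = - X / 2 - q * Y / 2).
  { unfold X, Y. lra. }
  rewrite E2 in H2. rewrite E3 in H3.
  assert (Ka : forall c dx dy, dx = ox - c * si - x -> dy = oy + c * co - y ->
             dx * co + dy * si = - X /\ - dx * si + dy * co = c - Y).
  { intros c dx dy -> ->. unfold X, Y, A1, V, ox, oy.
    pose proof (f_equal (fun w => s1 * w) Hcs) as F1.
    pose proof (f_equal (fun w => tt * w) Hcs) as F2.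
    pose proof (f_equal (fun w => c * w) Hcs) as F3.
    simpl in F1, F2, F3. split; lra. }
  destruct (Rle_dec 0 Y) as [HY | HY].
  - left.
    destruct (Ka (q/12) _ _ eq_refl eq_refl) as [K1 K2].
    rewrite (rot_norm _ _ co si Hcs), K1, K2.
    pose proof (final_ineq X Y H1 H2 H3 HY). nra.
  - right.
    destruct (Ka (- (q/12)) (ox + q / 12 * si - x) (oy - q / 12 * co - y)) as [K1 K2];
      [ring | ring |].
    rewrite (rot_norm _ _ co si Hcs), K1, K2.
    assert (H1' : - (1/2) <= X <= 1/2) by lra.
    assert (H2' : - (1/2) <= - X / 2 + q * (- Y) / 2 <= 1/2) by lra.
    assert (H3' : - (1/2) <= - X / 2 - q * (- Y) / 2 <= 1/2) by lra.
    pose proof (final_ineq X (- Y) H1' H2' H3' ltac:(lra)). nra.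
Qed.

Lemma count2 (f g : point -> bool) (l : list point) :
  (forall z, In z l -> f z = true \/ g z = true) ->
  (length l <= length (filter f l) + length (filter g l))%nat.
Proof.
  induction l as [|a l IH]; simpl; intros H.
  - lia.
  - assert (IH' := IH (fun z Hz => H z (or_intror Hz))).
    destruct (f a) eqn:Ef, (g a) eqn:Eg; simpl; try lia.
    destruct (H a (or_introl eq_refl)) as [E|E]; congruence.
Qed.

Definition fb (c : point) (r : R) (z : point) : bool :=
  if Rle_dec (dist2 c z) r then true else false.

Lemma covers_filter c r P : NoDup P ->
  disc_covers_at_least c r P (length (filter (fb c r) P)).
Proof.
  intros HND. exists (filter (fb c r) P). split; [apply NoDup_filter; auto|].
  split; [lia|].
  intros z Hz. apply filter_In in Hz. destruct Hz as [Hz E]. split; auto.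
  unfold fb in E. destruct (Rle_dec (dist2 c z) r); [auto | discriminate].
Qed.

Lemma half_bound n a b : (n <= a + b)%nat -> (ceil_half n <= Nat.max a b)%nat.
Proof.
  intros H. unfold ceil_half.
  pose proof (Nat.div_mod (n+1) 2 ltac:(lia)).
  pose proof (Nat.mod_upper_bound (n+1) 2 ltac:(lia)). lia.
Qed.

Theorem lemma1 (n : nat) (r : R) :
  (1 <= n)%nat ->
  sqrt (13 / 48) <= r -> r < sqrt 3 / 3 ->
  N_admissible n r (ceil_half n).
Proof.
  intros Hn Hr1 Hr2 P [[HND Hlen] Hd].
  destruct P as [|p0 ps]; [simpl in Hlen; lia|].
  destruct (h_zero p0 ps) as [t Ht].
  destruct (unit_u t) as [U1 [U2 U3]].
  assert (Hcs : cos t * cos t + sin t * sin t = 1).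
  { pose proof (sin2_cos2 t) as H. unfold Rsqr in H. lra. }
  assert (Hs : F p0 ps (u1x t) (u1y t) / 2 + F p0 ps (u2x t) (u2y t) / 2
               + F p0 ps (u3x t) (u3y t) / 2 = 0).
  { unfold h in Ht. lra. }
  pose (s1 := F p0 ps (u1x t) (u1y t) / 2).
  pose (s2 := F p0 ps (u2x t) (u2y t) / 2).
  pose (s3 := F p0 ps (u3x t) (u3y t) / 2).
  pose (tt := (s2 - s3) / q).
  pose (ox := s1 * cos t - tt * sin t).
  pose (oy := s1 * sin t + tt * cos t).
  pose (Cp := (ox - q / 12 * sin t, oy + q / 12 * cos t) : point).
  pose (Cm := (ox + q / 12 * sin t, oy - q / 12 * cos t) : point).
  assert (Hcov : forall z, In z (p0 :: ps) -> fb Cp r z = true \/ fb Cm r z = true).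
  { intros z Hz.
    pose proof (dir_bound p0 ps _ _ U1 Hd z Hz) as D1.
    pose proof (dir_bound p0 ps _ _ U2 Hd z Hz) as D2.
    pose proof (dir_bound p0 ps _ _ U3 Hd z Hz) as D3.
    destruct z as [x y]. unfold dot in D1, D2, D3. simpl in D1, D2, D3.
    assert (E2 : u2x t * x + u2y t * y
                 = - (cos t * x + sin t * y) / 2 + q / 2 * (- sin t * x + cos t * y))
      by (unfold u2x, u2y; field).
    assert (E3 : u3x t * x + u3y t * y
                 = - (cos t * x + sin t * y) / 2 - q / 2 * (- sin t * x + cos t * y))
      by (unfold u3x, u3y; field).
    unfold u1x, u1y in D1.
    assert (D2' : - (1/2) <= (- (cos t * x + sin t * y) / 2 + q / 2 * (- sin t * x + cos t * y)) - s2 <= 1/2)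
      by (unfold s2; lra).
    assert (D3' : - (1/2) <= (- (cos t * x + sin t * y) / 2 - q / 2 * (- sin t * x + cos t * y)) - s3 <= 1/2)
      by (unfold s3; lra).
    assert (D1' : - (1/2) <= (cos t * x + sin t * y) - s1 <= 1/2) by (unfold s1, u1x, u1y in *; lra).
    assert (Hs' : s1 + s2 + s3 = 0) by (unfold s1, s2, s3; lra).
    pose proof (geo (cos t) (sin t) s1 s2 s3 x y Hcs Hs' D1' D2' D3') as G.
    cbv zeta in G. fold tt ox oy in G.
    assert (Hsq : forall s, s <= 13/48 -> sqrt s <= r).
    { intros s Hs0. eapply Rle_trans; [apply sqrt_le_1_alt; exact Hs0 | exact Hr1]. }
    unfold fb, dist2. simpl.
    destruct G as [G | G]; [left | right];
      (destruct (Rle_dec _ r) as [_ | Hn']; [reflexivity | exfalso; apply Hn'; apply Hsq; exact G]). }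
  pose proof (count2 _ _ _ Hcov) as Hc. rewrite Hlen in Hc.
  pose proof (half_bound _ _ _ Hc) as Hb.
  destruct (Nat.le_ge_cases (length (filter (fb Cp r) (p0 :: ps))) (length (filter (fb Cm r) (p0 :: ps)))) as [L|L].
  - exists Cm. destruct (covers_filter Cm r (p0 :: ps) HND) as [Q [HQ1 [HQ2 HQ3]]].
    exists Q. split; auto. split; auto. lia.
  - exists Cp. destruct (covers_filter Cp r (p0 :: ps) HND) as [Q [HQ1 [HQ2 HQ3]]].
    exists Q. split; auto. split; auto. lia.
Qed.
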